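(* Let $q$ be a prime power, $n\geq 2$, and let $C_1=[n,k_1,d_1]_q$ and $C_2=[n,k_2,d_2]_q$ be linear codes over $\mathbb{F}_q$ with $C_2\subset C_1$ (so that the CSS construction gives an $[[n,k,d_z/d_x]]_q$ stabilizer code with $k=k_1-k_2$, $d_z\geq d_1$, $d_x\geq d_2^{\perp}$), where $d_2^{\perp}$ is the minimum distance of the Euclidean dual $C_2^{\perp}$. Suppose that $d_1\geq 2$, $d_2^{\perp}\geq 2$, and that $C_2^{\perp}$ contains at least one nonzero codeword whose $i$th coordinate is zero. Then: (i) if $C_1$ has a minimum weight codeword with nonzero $i$th coordinate, there exists an AQECC $[[n-1,k,d_z^{P_i}/d_x^{P_i}]]_q$ with $k=k_1-k_2$, $d_z^{P_i}\geq d_1-1$ and $d_x^{P_i}\geq d_2^{\perp}$; (ii) if $C_1$ has no minimum weight codeword with nonzero $i$th coordinate, there exists an AQECC $[[n-1,k,d_z^{P_i}/d_x^{P_i}]]_q$ with $k=k_1-k_2$, $d_z^{P_i}\geq d_1$ and $d_x^{P_i}\geq d_2^{\perp}\geq 2$.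
   Context: An AQECC $[[n,k,d_z/d_x]]_q$ is a $q^k$-dimensional subspace of $\mathbb{C}^{q^n}$ correcting all qudit-flip errors up to $\lfloor (d_x-1)/2\rfloor$ and all phase-shift errors up to $\lfloor (d_z-1)/2\rfloor$. CSS construction: if $C_2\subset C_1\subseteq\mathbb{F}_q^n$ are linear of dimensions $k_2<k_1$, there is an AQECC $[[n,k_1-k_2,d_z/d_x]]_q$ with $d_z=\mathrm{wt}(C_1\setminus C_2)$ and $d_x=\mathrm{wt}(C_2^{\perp}\setminus C_1^{\perp})$. *)

(* Defs.v *)
(* Linear codes over a finite field F (q = #|F|) are
   F-subspaces of row vectors 'rV[F]_n. *)
From HB Require Import structures.
From mathcomp Require Import all_boot all_order all_algebra all_field.
Set Implicit Arguments. Unset Strict Implicit. Unset Printing Implicit Defensive.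
Import GRing.Theory.
Local Open Scope ring_scope.

Definition wt (F : fieldType) (n : nat) (x : 'rV[F]_n) : nat :=
  #|[set i : 'I_n | x 0 i != 0]|.

Definition dotv (F : fieldType) (n : nat) (x y : 'rV[F]_n) : F :=
  \sum_(i < n) x 0 i * y 0 i.

Definition in_dual (F : fieldType) (n : nat) (C : {vspace 'rV[F]_n})
  (x : 'rV[F]_n) : Prop := forall c, c \in C -> dotv x c = 0.

Definition is_min_dist (F : fieldType) (n : nat) (C : {vspace 'rV[F]_n})
  (d : nat) : Prop :=
  (exists2 c, c \in C & (c != 0) && (wt c == d)) /\
  (forall c, c \in C -> c != 0 -> (d <= wt c)%N).

Definition is_dual_min_dist (F : fieldType) (n : nat) (C : {vspace 'rV[F]_n})
  (d : nat) : Prop :=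
  (exists c, [/\ in_dual C c, c != 0 & wt c = d]) /\
  (forall c, in_dual C c -> c != 0 -> (d <= wt c)%N).

(* Existence of an AQECC [[n,k,dz/dx]]_q obtained by the CSS construction
   from nested linear codes C2 < C1 <= F^n:  k = dim C1 - dim C2,
   wt(C1 \ C2) >= dz and wt(C2^perp \ C1^perp) >= dx. *)
Definition CSS_AQECC (F : fieldType) (n k dz dx : nat) : Prop :=
  exists C1 C2 : {vspace 'rV[F]_n},
    [/\ (C2 <= C1)%VS, C2 != C1, (\dim C1 - \dim C2)%N = k,
        (forall c, c \in C1 -> c \notin C2 -> (dz <= wt c)%N) &
        (forall c, in_dual C2 c -> ~ in_dual C1 c -> (dx <= wt c)%N)].

(* Main.v *)
Require Import Defs.
From HB Require Import structures.
From mathcomp Require Import all_boot all_order all_algebra all_field.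
From mathcomp Require Import zify.
Set Implicit Arguments. Unset Strict Implicit. Unset Printing Implicit Defensive.
Import GRing.Theory.
Local Open Scope ring_scope.

Section P.
Variables (F : fieldType) (m : nat) (i : 'I_m.+1).

Definition Pm : 'M[F]_(m.+1, m) := \matrix_(k, j) (k == lift i j)%:R.

Lemma punctE (x : 'rV[F]_m.+1) j : (x *m Pm) 0 j = x 0 (lift i j).
Proof.
rewrite mxE (bigD1 (lift i j)) //= mxE eqxx mulr1 big1 ?addr0 // => k /negbTE hk.
by rewrite mxE hk mulr0.
Qed.

Definition ext (y : 'rV[F]_m) : 'rV[F]_m.+1 :=
  \row_k (if unlift i k is Some j then y 0 j else 0).

Lemma extE_i y : ext y 0 i = 0.
Proof. by rewrite mxE unlift_none. Qed.
Lemma extE_l y j : ext y 0 (lift i j) = y 0 j.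
Proof. by rewrite mxE liftK. Qed.

Lemma punct_ext y : ext y *m Pm = y.
Proof. by apply/rowP => j; rewrite punctE extE_l. Qed.

Definition nzb n (x : 'rV[F]_n) k : nat := x 0 k != 0.
Lemma wt_sum n (x : 'rV[F]_n) : wt x = (\sum_(k < n) nzb x k)%N.
Proof.
rewrite /wt -sum1_card big_mkcond /=; apply: eq_bigr => k _.
by rewrite inE /nzb; case: (x 0 k != 0).
Qed.

Lemma wt_punct x : wt x = (wt (x *m Pm) + nzb x i)%N.
Proof.
rewrite !wt_sum (bigD1_ord i) //= addnC; congr (_ + _)%N.
by apply: eq_bigr => j _; rewrite /nzb punctE.
Qed.

Lemma wt_ext y : wt (ext y) = wt y.
Proof. by rewrite wt_punct punct_ext /nzb extE_i eqxx addn0. Qed.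

Lemma dot_ext y c : dotv (ext y) c = dotv y (c *m Pm).
Proof.
rewrite /dotv (bigD1_ord i) //= extE_i mul0r add0r.
by apply: eq_bigr => j _; rewrite extE_l punctE.
Qed.
End P.
Lemma punct_css (F : fieldType) m (i : 'I_m.+1) (C1 C2 : {vspace 'rV[F]_m.+1})
  d1 d2p dz :
  (C2 <= C1)%VS -> C2 != C1 -> (2 <= d1)%N ->
  (forall c, c \in C1 -> c != 0 -> (d1 <= wt c)%N) ->
  (forall c, in_dual C2 c -> c != 0 -> (d2p <= wt c)%N) ->
  (forall c, c \in C1 -> c != 0 -> (dz <= wt (c *m Pm F i))%N) ->
  CSS_AQECC F m (\dim C1 - \dim C2) dz d2p.
Proof.
move=> sC ne d1ge H1 H2 Hz.
pose f : 'Hom('rV[F]_m.+1, 'rV[F]_m) := linfun (mulmxr (Pm F i)).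
have fE c : f c = c *m Pm F i by rewrite lfunE.
have capC1 : (C1 :&: lker f)%VS = 0%VS.
  apply/eqP; rewrite -subv0; apply/subvP => c; rewrite memv_cap memv_ker fE memv0.
  case/andP => cC /eqP c0; apply/negPn/negP => cn0.
  have := H1 c cC cn0; rewrite (wt_punct i) c0.
  have -> : wt (0 : 'rV[F]_m) = 0%N by rewrite /wt; apply/eqP; rewrite cards_eq0;
    apply/eqP/setP => k; rewrite !inE mxE eqxx.
  rewrite /nzb add0n; case: (c 0 i != 0) => /= h; move: (leq_trans d1ge h) => //.
have capC2 : (C2 :&: lker f)%VS = 0%VS.
  apply/eqP; rewrite -subv0 -capC1; exact: capvS.
have dim1 := limg_dim_eq capC1.
have dim2 := limg_dim_eq capC2.
exists (f @: C1)%VS, (f @: C2)%VS; split.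
- exact: limgS.
- apply/eqP => eqC.
  have := dimv_leqif_eq sC; rewrite -dim1 -dim2 eqC => -[_].
  by rewrite eqxx (negbTE ne).
- by rewrite dim1 dim2.
- move=> c' /memv_imgP [c cC ->] nC2.
  have cn0 : c != 0.
    by apply: contraNneq nC2 => ->; rewrite linear0 mem0v.
  by rewrite fE; apply: Hz.
- move=> y dy ndy.
  have yn0 : y != 0.
    apply: contra_notN ndy => /eqP ->; rewrite /in_dual /dotv => c _.
    by rewrite big1 // => k _; rewrite mxE mul0r.
  rewrite -(wt_ext i); apply: H2.
    move=> c cC; rewrite dot_ext; apply: dy; rewrite -fE; exact: memv_img.
  by apply: contraNneq yn0 => e; rewrite -(punct_ext i y) e mul0mx.
Qed.
Unset Implicit Arguments.
Set Strict Implicit.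

Theorem theorem6 (F : finFieldType) (n : nat) (C1 C2 : {vspace 'rV[F]_n})
  (d1 d2p : nat) (i : 'I_n) :
  (2 <= n)%N ->
  (C2 <= C1)%VS -> C2 != C1 ->
  is_min_dist C1 d1 -> is_dual_min_dist C2 d2p ->
  (2 <= d1)%N -> (2 <= d2p)%N ->
  (exists c, [/\ in_dual C2 c, c != 0 & c 0 i = 0]) ->
  ((exists2 c, c \in C1 & [&& c != 0, wt c == d1 & c 0 i != 0]) ->
     CSS_AQECC F n.-1 (\dim C1 - \dim C2) d1.-1 d2p) /\
  (~ (exists2 c, c \in C1 & [&& c != 0, wt c == d1 & c 0 i != 0]) ->
     CSS_AQECC F n.-1 (\dim C1 - \dim C2) d1 d2p).
Proof.
case: n C1 C2 i => [|m] C1 C2 i; first by case: i.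
move=> _ sC ne [_ H1] [_ H2] d1ge _ _ /=; split.
- move=> _; apply: (punct_css (i:=i) sC ne d1ge H1 H2) => c cC cn0.
  have := H1 c cC cn0; rewrite (wt_punct i).
  have : (nzb c i <= 1)%N by rewrite /nzb; case: (c 0 i != 0).
  move: (nzb c i) => b hb h; rewrite -subn1 leq_subLR; apply: (leq_trans h); rewrite addnC leq_add2r; exact: hb.
- move=> nex; apply: (punct_css (i:=i) sC ne d1ge H1 H2) => c cC cn0.
  have := H1 c cC cn0; rewrite (wt_punct i).
  case ci: (c 0 i != 0).
    have hne : wt c != d1.
      by apply/negP => /eqP e; apply: nex; exists c => //; rewrite cn0 ci e eqxx.
    have nz1 : nzb c i = 1%N by rewrite /nzb ci.
    rewrite (wt_punct i) nz1 addn1 in hne; rewrite nz1 addn1 => h.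
    by rewrite -ltnS ltn_neqAle eq_sym hne h.
  have nz0 : nzb c i = 0%N by rewrite /nzb ci.
  by rewrite nz0 addn0.
Qed.
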